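(* Let $\Phi$ be a $(3,3)$-monotone formula with $n$ clauses and $n$ variables, and let $G_\Phi$ be the graph described in the context. If $\Phi$ is 1-satisfiable, then $\mathcal{F}(\overline{G_\Phi})=\{\frac{7}{3}n\}$; if $\Phi$ is not 1-satisfiable, then $\mathcal{F}(\overline{G_\Phi})=\emptyset$.
   Context: A $(3,3)$-monotone formula is a set $C$ of clauses over a variable set $X$, where each clause consists of three distinct positive variables and each variable occurs in exactly three clauses, so $|C|=|X|=n$. It is 1-satisfiable if some truth assignment makes exactly one variable of each clause true. The graph $G_\Phi$ has $5n$ vertices: for each clause $c$ with variables $x,y,z$ (in an arbitrary fixed order) there are vertices $c(x),c(y),c(z),a_1^c,a_2^c$ forming the path $c(x)\,a_1^c\,c(y)\,a_2^c\,c(z)$; for each variable $x$ occurring in clauses $c,c',c''$, the vertices $c(x),c'(x),c''(x)$ form a triangle; there are no other edges. $\overline{G}$ denotes the complement. A colouring is a map to $\mathbb{Z}^+$ with adjacent vertices receiving distinct colours; a fall $k$-colouring is a colouring with exactly $k$ colours in which every vertex is adjacent to a vertex of every colour other than its own; $\mathcal{F}(G)$ is the set of $k$ for which $G$ has a fall $k$-colouring. *)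

(* Defs.v *)
From mathcomp Require Import all_boot.
Set Implicit Arguments. Unset Strict Implicit. Unset Printing Implicit Defensive.

Definition compl_rel (T : finType) (e : rel T) : rel T :=
  fun u v => (u != v) && ~~ e u v.

Definition fall_colouring (T : finType) (e : rel T) (k : nat) (f : T -> nat) : Prop :=
  [/\ (forall v, 0 < f v),
      (forall u v, e u v -> f u != f v),
      size (undup (codom f)) = k
    & (forall v u, f u != f v -> exists w, e v w && (f w == f u))].

Definition in_fall_spectrum (T : finType) (e : rel T) (k : nat) : Prop :=
  exists f : T -> nat, fall_colouring e k f.

(* Clauses indexed by 'I_n, variables by 'I_n; cl c : 'I_3 -> 'I_n lists the
   three variables of clause c in the fixed (arbitrary) order x, y, z. *)
Definition monotone33 (n : nat) (cl : 'I_n -> 'I_3 -> 'I_n) : Prop :=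
  [/\ (forall c, injective (cl c)),
      (forall x : 'I_n, #|[set c | x \in codom (cl c)]| = 3)
    & injective (fun c => [set cl c i | i in 'I_3])].               (* C is a set of clauses *)

Definition one_satisfiable (n : nat) (cl : 'I_n -> 'I_3 -> 'I_n) : Prop :=
  exists a : 'I_n -> bool, forall c, #|[set i | a (cl c i)]| = 1.

(* vertex (c, i): i = 0,1,2 are c(x), c(y), c(z); i = 3 is a_1^c; i = 4 is a_2^c *)
Definition GV (n : nat) := ('I_n * 'I_5)%type.

(* the path c(x) a1 c(y) a2 c(z), i.e. 0-3-1-4-2 *)
Definition path_edge (i j : nat) : bool :=
  [|| (i == 0) && (j == 3), (i == 3) && (j == 1),
      (i == 1) && (j == 4) | (i == 4) && (j == 2)].

Definition var_of (n : nat) (cl : 'I_n -> 'I_3 -> 'I_n) (v : GV n) : option 'I_n :=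
  if v.2 < 3 then Some (cl v.1 (inord v.2)) else None.

Definition GPhi (n : nat) (cl : 'I_n -> 'I_3 -> 'I_n) : rel (GV n) :=
  fun u v =>
    ((u.1 == v.1) && (path_edge u.2 v.2 || path_edge v.2 u.2))
    || [&& u != v, var_of cl u != None & var_of cl u == var_of cl v].

(* Main.v *)
Require Import Defs.
From mathcomp Require Import all_boot.
From mathcomp Require Import zify.
Set Implicit Arguments. Unset Strict Implicit. Unset Printing Implicit Defensive.

Definition o3 : 'I_5 := @Ordinal 5 3 isT.
Definition o4 : 'I_5 := @Ordinal 5 4 isT.

Lemma pe_irr i : path_edge i i = false.
Proof. by case: i => [|[|[|[|[|i]]]]]. Qed.

Lemma pe_small i j : i < 3 -> j < 3 -> path_edge i j = false.
Proof. by case: i => [|[|[|i]]] //; case: j => [|[|[|j]]]. Qed.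

Lemma pe_big i j : 3 <= i < 5 -> 3 <= j < 5 -> path_edge i j = false.
Proof. by case: i => [|[|[|[|[|i]]]]] //; case: j => [|[|[|[|[|j]]]]]. Qed.

Lemma pe_lt3 i j : i < 3 -> path_edge i j || path_edge j i -> (j == 3) || (j == 4).
Proof. by case: i => [|[|[|i]]] //; case: j => [|[|[|[|[|j]]]]]. Qed.

Lemma pe3 i : path_edge i 3 || path_edge 3 i -> (i == 0) || (i == 1).
Proof. by case: i => [|[|[|[|[|i]]]]]. Qed.

Lemma pe4 i : path_edge i 4 || path_edge 4 i -> (i == 1) || (i == 2).
Proof. by case: i => [|[|[|[|[|i]]]]]. Qed.

Lemma pe_k_lt3 i k : 3 <= k -> path_edge i k || path_edge k i -> i < 3.
Proof. by case: i => [|[|[|[|[|i]]]]] //; case: k => [|[|[|[|[|k]]]]]. Qed.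

Lemma three_idx a b j : a < 2 -> 0 < b < 3 -> a != b -> j < 5 ->
  [&& j < 3, j != a & j != b] = (j == 3 - a - b).
Proof.
by case: a => [|[|a]] //; case: b => [|[|[|b]]] //; case: j => [|[|[|[|[|j]]]]].
Qed.

Definition loc (r i : nat) : nat :=
  if i == 3 then 1 else if i == 4 then 2 else if i == r then 0
  else if i == 0 then 1 else if i == 2 then 2 else if r == 0 then 1 else 2.

Definition ja (r s : nat) : nat :=
  if s == 1 then (if r == 0 then 1 else 0) else (if r == 2 then 1 else 2).

Lemma LL0 r i : r < 3 -> i < 5 -> (loc r i == 0) = (i == r).
Proof. by case: r => [|[|[|r]]] //; case: i => [|[|[|[|[|i]]]]]. Qed.

Lemma LL1 r i : loc r i <= 2.
Proof. rewrite /loc. by repeat case: ifP. Qed.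

Lemma LL2 r i j : r < 3 -> i < 5 -> j < 5 -> i != j -> loc r i = loc r j -> loc r i != 0 ->
  path_edge i j || path_edge j i.
Proof. by case: r => [|[|[|r]]] //; case: i => [|[|[|[|[|i]]]]] //; case: j => [|[|[|[|[|j]]]]]. Qed.

Lemma LL3 r s : r < 3 -> 0 < s < 3 -> [/\ loc r (2 + s) = s, loc r (ja r s) = s & ja r s < 3].
Proof. by case: r => [|[|[|r]]] //; case: s => [|[|[|s]]]. Qed.

Section Basics.
Variables (n : nat) (cl : 'I_n -> 'I_3 -> 'I_n).
Hypothesis Hmon : monotone33 cl.

Local Notation T := (GV n).
Local Notation G := (GPhi cl).

Definition vxg (v : T) : 'I_n := cl v.1 (inord v.2).
Local Notation vx := vxg.

Lemma GE (u v : T) : G u v = ((u.1 == v.1) && (path_edge u.2 v.2 || path_edge v.2 u.2))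
   || [&& u != v, u.2 < 3, v.2 < 3 & vx u == vx v].
Proof. by rewrite /GPhi /var_of /vxg; case: (u.2 < 3); case: (v.2 < 3); rewrite ?andbF ?andbT. Qed.

Lemma Girr (u : T) : G u u = false.
Proof. by rewrite GE !eqxx pe_irr. Qed.

Lemma Gsym (u v : T) : G u v = G v u.
Proof.
rewrite !GE (eq_sym v.1) (orbC (path_edge v.2 _)) (eq_sym v) (eq_sym (vx v)).
by case: (u.2 < 3); case: (v.2 < 3); rewrite ?andbF.
Qed.

Lemma clinj c (i j : 'I_5) : i < 3 -> j < 3 -> cl c (inord i) = cl c (inord j) -> i = j.
Proof.
case: Hmon => Hinj _ _ hi hj /Hinj /(congr1 (@nat_of_ord 3)); rewrite !inordK // => e.
exact: val_inj.
Qed.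

Lemma Gsame c (i j : 'I_5) : i != j -> G (c, i) (c, j) = (path_edge i j || path_edge j i).
Proof.
move=> ij; rewrite GE /= eqxx /=.
case E: [&& _, _, _ & _]; last by rewrite orbF.
move/and4P: E => [_ hi hj /eqP]; rewrite /vxg /= => /(clinj hi hj) ei.
by rewrite ei eqxx in ij.
Qed.

Lemma GA (u w : T) : u.2 < 3 -> G u w ->
  [\/ w = (u.1, o3), w = (u.1, o4) | [/\ w != u, w.2 < 3 & vx w = vx u]].
Proof.
move=> u3; rewrite GE => /orP[/andP[/eqP e1 pe]|/and4P[uw _ w3 /eqP e]].
  have := pe_lt3 u3 pe; case: w e1 {pe} => c j /= -> /orP[]/eqP e.
    by apply: Or31; congr pair; apply: val_inj.
  by apply: Or32; congr pair; apply: val_inj.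
by apply: Or33; split; rewrite // eq_sym.
Qed.

Lemma Ga3 (w : T) c : G w (c, o3) -> w.1 = c /\ ((w.2 == 0 :> nat) || (w.2 == 1 :> nat)).
Proof.
rewrite GE /= !andbF orbF => /andP[/eqP -> pe]; split=> //; exact: pe3.
Qed.

Lemma Ga4 (w : T) c : G w (c, o4) -> w.1 = c /\ ((w.2 == 1 :> nat) || (w.2 == 2 :> nat)).
Proof.
rewrite GE /= !andbF orbF => /andP[/eqP -> pe]; split=> //; exact: pe4.
Qed.

Definition Vx (x : 'I_n) : {set T} := [set v : T | (v.2 < 3) && (vx v == x)].

Lemma card_Vx x : #|Vx x| = 3.
Proof.
case: Hmon => _ Hcnt _; transitivity #|[set c | x \in codom (cl c)]|; last exact: Hcnt.
rewrite -(card_in_imset (f := fst)).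
  apply: eq_card => c; rewrite inE; apply/imsetP/idP.
    move=> [v]; rewrite inE => /andP[_ /eqP <-] ->; exact: codom_f.
  move=> /codomP[i ->]; exists (c, widen_ord (isT : 3 <= 5) i) => //.
  by rewrite inE /= ltn_ord /vx /= inord_val eqxx.
move=> [c i] [d j]; rewrite !inE /= => /andP[hi /eqP ex] /andP[hj /eqP ey] ecd.
move: ey; rewrite -ecd /vx /= -ex /= => /esym/(clinj hi hj) ->; done.
Qed.

Lemma four_distinct (X : finType) (A : {set X}) a b c d : #|A| = 3 ->
  a \in A -> b \in A -> c \in A -> d \in A ->
  b != a -> c != a -> c != b -> d != a -> d != b -> d != c -> False.
Proof.
move=> cA aA bA cA' dA ba ca cb da db dc.
have h1 := cardsD1 a A; rewrite aA cA in h1.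
have h2 := cardsD1 b (A :\ a); rewrite !inE ba bA /= in h2.
have h3 := cardsD1 c (A :\ a :\ b); rewrite !inE cb ca cA' /= in h3.
have h0 : #|A :\ a :\ b :\ c| = 0 by lia.
have := cards0_eq h0 => /setP /(_ d); by rewrite !inE dc db da dA.
Qed.

End Basics.

Lemma count_colours (X : finType) (f : X -> nat) :
  size (undup (codom f)) = #|[set [set w | f w == f v] | v : X]|.
Proof.
set g := fun k => [set w | f w == k].
have ginj : {in codom f &, injective g}.
  move=> k1 k2 /codomP[v1 ->] _ e.
  have : v1 \in g (f v1) by rewrite inE.
  by rewrite e inE => /eqP.
have U : uniq (map g (undup (codom f))).
  by rewrite map_inj_in_uniq ?undup_uniq // => x y; rewrite !mem_undup; exact: ginj.
have /card_uniqP E := U.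
rewrite -(size_map g) -E.
apply: eq_card => S; apply/mapP/imsetP.
  by move=> [k]; rewrite mem_undup => /codomP[v ->] ->; exists v.
by move=> [v _ ->]; exists (f v); rewrite ?mem_undup ?codom_f.
Qed.

Section Forward.
Variables (n : nat) (cl : 'I_n -> 'I_3 -> 'I_n).
Hypothesis Hmon : monotone33 cl.

Local Notation T := (GV n).
Local Notation G := (GPhi cl).
Local Notation H := (compl_rel (GPhi cl)).
Local Notation vx := (vxg cl).

Variable f : T -> nat.
Hypothesis Hprop : forall u v, H u v -> f u != f v.
Hypothesis Hfall : forall v u, f u != f v -> exists w, H v w && (f w == f u).

Lemma L1 (u v : T) : u != v -> f u = f v -> G u v.
Proof.
move=> uv fuv; apply/negPn/negP => nG.
by move: (@Hprop u v); rewrite /compl_rel uv nG fuv eqxx => /(_ isT).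
Qed.

Lemma L2 (u v : T) : G u v -> exists w, w != u /\ f w = f u.
Proof.
move=> Guv; case: (eqVneq (f u) (f v)) => [e|ne].
  exists v; split; last by rewrite e.
  by apply/eqP => vu; move: Guv; rewrite vu Girr.
have [w /andP[/andP[vw nG] /eqP fw]] := Hfall ne.
exists w; split=> //; apply/eqP=> wu; move: nG; by rewrite wu Gsym Guv.
Qed.

Definition free (u : T) := [&& u.2 < 3, f u != f (u.1, o3) & f u != f (u.1, o4)].

Lemma free3 u : free u -> u.2 < 3.
Proof. by case/and3P. Qed.

Lemma L3 (u t : T) : free u -> t.2 < 3 -> f t = f u -> free t.
Proof.
move=> /and3P[u3 fu3 fu4] t3 ftu; rewrite /free t3 /=.
apply/andP; split; apply/eqP => e.
  have : G u (t.1, o3).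
    apply: L1; last by rewrite -ftu e.
    by apply/eqP => eu; move: u3; rewrite eu.
  move/Ga3 => [e1 _]; move: fu3; by rewrite e1 -ftu e eqxx.
have : G u (t.1, o4).
  apply: L1; last by rewrite -ftu e.
  by apply/eqP => eu; move: u3; rewrite eu.
move/Ga4 => [e1 _]; move: fu4; by rewrite e1 -ftu e eqxx.
Qed.

Lemma L4 (u w : T) : free u -> w != u -> f w = f u -> w.2 < 3 /\ vx w = vx u.
Proof.
move=> fu wu fw; have /and3P[u3 fu3 fu4] := fu.
have : G u w by rewrite Gsym; apply: L1.
case/(GA u3) => [e|e|[_ ? ?]] //; rewrite e in fw.
  by move: fu3; rewrite -fw eqxx.
by move: fu4; rewrite -fw eqxx.
Qed.

Lemma pathnb (u : T) : u.2 < 3 -> exists v, G u v.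
Proof.
case: u => c [[|[|[|i]]] hi] //= _.
- by exists (c, o3); rewrite Gsame.
- by exists (c, o3); rewrite Gsame.
- by exists (c, o4); rewrite Gsame.
Qed.

Lemma ClaimB' (u t : T) : free u -> t.2 < 3 -> vx t = vx u -> f t = f u.
Proof.
move=> fu t3 tx.
case: (eqVneq t u) => [-> //|tu].
have u3 := free3 fu.
have [v Guv] := pathnb u3.
have [w [wu fw]] := L2 Guv.
have [w3 wx] := L4 fu wu fw.
case: (eqVneq t w) => [-> //|tw].
apply/eqP/negPn/negP; rewrite eq_sym => ftu.
have [w' /andP[/andP[tw' nG] /eqP fw']] := @Hfall t u (ftu : f u != f t).
have w'u : w' != u.
  apply/eqP => e; move: nG; rewrite e GE tu t3 u3 tx eqxx /=; by rewrite orbT.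
have w'w : w' != w.
  apply/eqP => e; move: nG; rewrite e GE tw t3 w3 tx wx eqxx /=; by rewrite orbT.
have [w'3 w'x] := L4 fu w'u fw'.
have inV (z : T) : z.2 < 3 -> vx z = vx u -> z \in Vx cl (vx u).
  by move=> z3 zx; rewrite inE z3 zx eqxx.
apply: (four_distinct (card_Vx Hmon (vx u)) (inV _ u3 erefl) (inV _ w3 wx)
   (inV _ t3 tx) (inV _ w'3 w'x)) => //.
by rewrite eq_sym.
Qed.

Lemma ClaimB (u t : T) : free u -> t.2 < 3 -> vx t = vx u -> free t.
Proof. by move=> fu t3 tx; apply: (L3 fu t3); apply: ClaimB'. Qed.

Lemma ClaimA c : exists r, r < 3 /\ forall j : 'I_5, free (c, j) = (j == r :> nat).
Proof.
have o30 : G (c, o3) (c, Ordinal (isT : 0 < 5)) by rewrite Gsame.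
have o41 : G (c, o4) (c, Ordinal (isT : 2 < 5)) by rewrite Gsame.
have [p1 [p1n fp1]] := L2 o30.
have [p2 [p2n fp2]] := L2 o41.
have [e1 h1] := Ga3 (L1 p1n fp1).
have [e2 h2] := Ga4 (L1 p2n fp2).
have f34 : f (c, o3) != f (c, o4).
  by apply: Hprop; rewrite /compl_rel Gsame // xpair_eqE eqxx.
case: p1 p1n fp1 e1 h1 => c1 i1 /= p1n fp1 e1 h1; subst c1.
case: p2 p2n fp2 e2 h2 => c2 i2 /= p2n fp2 e2 h2; subst c2.
have p12 : i1 != i2 :> nat.
  apply/eqP => /val_inj e; move: f34; by rewrite -fp1 -fp2 e eqxx.
have ha : i1 < 2 by case/orP: h1 => /eqP ->.
have hb : 0 < i2 < 3 by case/orP: h2 => /eqP ->.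
exists (3 - i1 - i2); split; first by lia.
move=> j; rewrite -three_idx ?ltn_ord //.
have Ek (k : 'I_5) ok : k < 3 -> f (c, k) = f (c, ok) -> j < 3 ->
    (f (c, j) == f (c, ok)) = (j == k :> nat).
  move=> k3 fk j3; apply/eqP/eqP => [e|/val_inj ->//].
  case: (eqVneq j k) => [-> //|ne].
  have := @L1 (c, j) (c, k).
  rewrite Gsame // !pe_small // e fk => h.
  have hne : (c, j) != (c, k) by rewrite xpair_eqE eqxx.
  by have := h hne erefl.
rewrite /free /=; case j3 : (j < 3) => //=.
by rewrite (Ek i1) ?(Ek i2) //; lia.
Qed.


Lemma forward_sat : one_satisfiable cl.
Proof.
exists (fun x => [exists v, free v && (vx v == x)]) => c.
have [r [r3 Hr]] := ClaimA c.
apply/eqP/cards1P; exists (inord r); apply/setP => i; rewrite !inE.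
have -> : [exists v, free v && (vx v == cl c i)] = free (c, widen_ord (isT : 3 <= 5) i).
  apply/existsP/idP => [[v /andP[fv /eqP vxe]]|fi].
    apply: (ClaimB fv); first exact: (ltn_ord i).
    by rewrite /vxg /= inord_val.
  by exists (c, widen_ord (isT : 3 <= 5) i); rewrite fi /vxg /= inord_val eqxx.
rewrite Hr /=; apply/eqP/eqP => [e|->]; first by apply: val_inj; rewrite /= inordK.
by rewrite /= inordK.
Qed.

Definition cls (v : T) : {set T} := [set w | f w == f v].

Lemma cls_eq (u v : T) : cls u = cls v -> f u = f v.
Proof. move=> e; have : u \in cls u by rewrite inE. by rewrite e inE => /eqP. Qed.

Lemma cls_eq' (u v : T) : f u = f v -> cls u = cls v.
Proof. by move=> e; apply/setP => w; rewrite !inE e. Qed.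

Lemma forward_count : 3 * size (undup (codom f)) = 7 * n.
Proof.
rewrite count_colours.
set A := [set v : T | 3 <= v.2].
set F := [set v : T | free v].
have -> : [set [set w | f w == f v] | v : T] = (cls @: A) :|: (cls @: F).
  apply/setP => C; rewrite inE; apply/imsetP/orP.
    move=> [v _ ->]; case: (leqP 3 v.2) => v3.
      by left; apply/imsetP; exists v; rewrite ?inE.
    case fv: (free v); first by right; apply/imsetP; exists v; rewrite ?inE.
    left; move/negbT: fv; rewrite /free v3 /= negb_and !negbK => /orP[] /eqP e.
      by apply/imsetP; exists (v.1, o3); rewrite ?inE //; apply: cls_eq'.
    by apply/imsetP; exists (v.1, o4); rewrite ?inE //; apply: cls_eq'.
  by move=> [] /imsetP[v _ ->]; exists v.
have disj : cls @: A :&: cls @: F = set0.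
  apply/setP => C; rewrite !inE; apply/negbTE/negP => /andP[/imsetP[a aA ->] /imsetP[u uF e]].
  rewrite inE in aA; rewrite inE in uF.
  have := cls_eq e => fe.
  have au : a != u by apply/eqP => au; move: aA; rewrite au leqNgt (free3 uF).
  have [a3 _] := L4 uF au fe.
  by move: aA; rewrite leqNgt a3.
have cA : #|cls @: A| = 2 * n.
  rewrite card_in_imset.
    have -> : A = setX [set: 'I_n] [set o3; o4].
      apply/setP => -[c [i hi]]; rewrite !inE /=.
      by case: i hi => [|[|[|[|[|i]]]]].
    by rewrite cardsX cardsT card_ord cards2 mulnC.
  move=> a b; rewrite !inE => aA bA /cls_eq e.
  case: (eqVneq a b) => // ab; have := L1 ab e.
  rewrite GE !pe_big ?ltn_ord ?aA ?bA // andbF /= ltnNge aA /= andbF //.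
have cF : #|F| = n.
  rewrite -(card_in_imset (f := fst)).
    have -> : fst @: F = [set: 'I_n].
      apply/setP => c; rewrite inE; apply/imsetP.
      have [r [r3 Hr]] := ClaimA c.
      exists (c, inord r) => //; rewrite inE Hr /= inordK //; lia.
    by rewrite cardsT card_ord.
  move=> [c i] [d j]; rewrite !inE /= => fi fj ecd; subst d.
  have [r [r3 Hr]] := ClaimA c.
  move: fi fj; rewrite !Hr => /eqP ei /eqP ej.
  by congr pair; apply: val_inj; rewrite /= ei ej.
have cPf : 3 * #|cls @: F| = #|F|.
  rewrite -[#|F|]sum1_card (partition_big_imset cls) /= mulnC -sum_nat_const.
  apply: eq_bigr => C /imsetP[u uF ->].
  rewrite inE in uF.
  rewrite sum1dep_card; transitivity #|Vx cl (vx u)|; first exact/esym/card_Vx.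
  apply: eq_card => v.
  rewrite !inE; apply/andP/andP.
    move=> [v3 /eqP vxe]; split; first exact: (ClaimB uF v3 vxe).
    by apply/eqP/cls_eq'; apply: (ClaimB' uF v3 vxe).
  move=> [fv /eqP /cls_eq fe]; case: (eqVneq v u) => [->|vu].
    by rewrite free3 // eqxx.
  by have [-> ->] := L4 uF vu fe.
rewrite cardsU disj cards0 subn0 cA mulnDr cPf cF; lia.
Qed.

End Forward.

Section Backward.
Variables (n : nat) (cl : 'I_n -> 'I_3 -> 'I_n).
Hypothesis Hmon : monotone33 cl.

Local Notation T := (GV n).
Local Notation G := (GPhi cl).
Local Notation H := (compl_rel (GPhi cl)).
Local Notation vx := (vxg cl).

Variable a : 'I_n -> bool.
Hypothesis Ha : forall c, #|[set i | a (cl c i)]| = 1.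

Definition rr (c : 'I_n) : 'I_3 := odflt ord0 [pick i : 'I_3 | a (cl c i)].

Lemma ra c i : a (cl c i) = (i == rr c).
Proof.
move/eqP: (Ha c) => /cards1P [i0 e].
have mem j : a (cl c j) = (j == i0).
  by have := congr1 (fun S : {set 'I_3} => j \in S) e; rewrite !inE.
rewrite /rr; case: pickP => [j aj|none]; last by have := none i0; rewrite mem eqxx.
by rewrite mem; move: aj; rewrite mem => /eqP ->.
Qed.

Definition Fc (v : T) : nat :=
  if loc (rr v.1) v.2 == 0 then 2 * n + 1 + vx v else 2 * v.1 + loc (rr v.1) v.2.

Lemma key (v : T) : v.2 < 3 -> a (vx v) = (loc (rr v.1) v.2 == 0).
Proof.
move=> v3; rewrite LL0 ?ltn_ord // /vxg ra.
by apply/eqP/eqP => [<-|e]; [rewrite inordK | apply: val_inj; rewrite /= inordK].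
Qed.

Lemma loc0_lt3 (v : T) : loc (rr v.1) v.2 == 0 -> v.2 < 3.
Proof. by rewrite LL0 ?ltn_ord // => /eqP ->. Qed.

Lemma Fpos v : 0 < Fc v.
Proof. rewrite /Fc; case: eqP => //; lia. Qed.

Lemma Fprop (u v : T) : u != v -> Fc u = Fc v -> G u v.
Proof.
case: u => cu iu; case: v => cv iv uv; rewrite /Fc /=.
have hu := LL1 (rr cu) iu; have hv := LL1 (rr cv) iv.
have hu1 := ltn_ord cu; have hv1 := ltn_ord cv.
case lu: (loc _ iu == 0); case lv: (loc _ iv == 0).
- move=> /addnI e.
  rewrite GE uv (loc0_lt3 (v := (cu, iu)) lu) (loc0_lt3 (v := (cv, iv)) lv) /=.
  by rewrite (val_inj e) eqxx orbT.
- move=> e; exfalso; clear lu lv; lia.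
- move=> e; exfalso; clear lu lv; lia.
- move/negbT/eqP: lu => lu; move/negbT/eqP: lv => lv e.
  have e1 : cu = cv by apply: ord_inj; lia.
  subst cv.
  have el : loc (rr cu) iu = loc (rr cu) iv by lia.
  have ij : iu != iv by apply: contraNneq uv => ->.
  rewrite Gsame //; apply: (LL2 (r := rr cu)) => //; by apply/eqP.
Qed.

Lemma Fval0 (w : T) : w.2 < 3 -> a (vx w) -> Fc w = 2 * n + 1 + vx w.
Proof. by move=> w3; rewrite key // /Fc => ->. Qed.

Lemma Ffall v u : Fc u != Fc v -> exists w, H v w && (Fc w == Fc u).
Proof.
move=> Fuv.
have H1 (w : T) : Fc w = Fc u -> ~~ G v w -> H v w && (Fc w == Fc u).
  move=> Fw nG; rewrite /compl_rel nG Fw eqxx !andbT.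
  by apply: contraNneq Fuv => ->; rewrite Fw.
case lu: (loc (rr u.1) u.2 == 0).
  have u3 := loc0_lt3 lu.
  have ax : a (vx u) by rewrite key.
  have Fu : Fc u = 2 * n + 1 + vx u by rewrite /Fc lu.
  case: Hmon => _ Hcnt _.
  have : 1 < #|[set c | vx u \in codom (cl c)]| by rewrite Hcnt.
  case/card_gt1P => c1 [c2 []]; rewrite !inE => /codomP[i1 e1] /codomP[i2 e2] c12.
  pose w1 : T := (c1, widen_ord (isT : 3 <= 5) i1).
  pose w2 : T := (c2, widen_ord (isT : 3 <= 5) i2).
  have vw1 : vx w1 = vx u by rewrite /vxg /= inord_val -e1.
  have vw2 : vx w2 = vx u by rewrite /vxg /= inord_val -e2.
  have Fw1 : Fc w1 = Fc u by rewrite Fval0 ?vw1 ?ax ?Fu //=; exact: ltn_ord.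
  have Fw2 : Fc w2 = Fc u by rewrite Fval0 ?vw2 ?ax ?Fu //=; exact: ltn_ord.
  have hv (w : T) : w.2 < 3 -> vx w = vx u -> G v w -> v.1 = w.1.
    move=> w3 wx; rewrite GE => /orP[/andP[/eqP -> _] //|/and4P[_ v3 _ /eqP vxe]].
    exfalso; move: Fuv; rewrite Fu Fval0 // ?vxe ?wx ?eqxx //.
  case G1: (G v w1); last by exists w1; rewrite H1 ?G1.
  case G2: (G v w2); last by exists w2; rewrite H1 ?G2.
  have := hv w1 (ltn_ord i1) vw1 G1; have := hv w2 (ltn_ord i2) vw2 G2.
  by move=> -> /= e; rewrite e eqxx in c12.
set c := u.1; set r := rr c; set s := loc r u.2.
have s0 : 0 < s by rewrite lt0n lu.
have s2 := LL1 r u.2.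
have [l1 l2 j3] := LL3 (ltn_ord r) (s := s) (ltac:(lia)).
have Fu : Fc u = 2 * c + s by rewrite /Fc lu.
pose w1 : T := (c, inord (2 + s)).
pose w2 : T := (c, inord (ja r s)).
have w1v : w1.2 = 2 + s :> nat by rewrite /= inordK //; lia.
have w2v : w2.2 = ja r s :> nat by rewrite /= inordK //; lia.
have Fw1 : Fc w1 = Fc u.
  rewrite Fu /Fc /= inordK; last lia.
  rewrite l1; case: eqP => //; lia.
have Fw2 : Fc w2 = Fc u.
  rewrite Fu /Fc /= inordK; last lia.
  rewrite l2; case: eqP => //; lia.
case G1: (G v w1); last by exists w1; rewrite H1 ?G1.
exists w2; rewrite H1 //.
have vw1 : v != w1 by apply: contraNneq Fuv => ->; rewrite Fw1.
have vw2 : v != w2 by apply: contraNneq Fuv => ->; rewrite Fw2.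
move: G1; rewrite GE => /orP[/andP[/eqP e pe]|/and4P[_ _]]; last by rewrite w1v; lia.
have i3 : v.2 < 3 by apply: (pe_k_lt3 (k := 2 + s)); rewrite // -w1v.
rewrite GE /= e eqxx /= !pe_small ?w2v //= negb_and.
apply/orP; right; apply/negP => /and3P[_ _ /eqP vxe].
simpl in e.
have ev : v.2 = w2.2.
  apply: (clinj Hmon (c := v.1) i3); first by rewrite w2v.
  by move: vxe; rewrite /vxg /= -e.
move/negP: vw2; apply; apply/eqP.
move: e ev; clear; case: v => cv iv /= -> ->; done.
Qed.

Lemma backward : exists F : T -> nat, fall_colouring H (size (undup (codom F))) F.
Proof.
exists Fc; split => //; first exact: Fpos.
  move=> u v /andP[uv nG]; apply/eqP => e; move/negP: nG; apply; exact: Fprop uv e.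
exact: Ffall.
Qed.

End Backward.

Theorem mainTheorem20 (n : nat) (cl : 'I_n -> 'I_3 -> 'I_n) :
  monotone33 cl ->
  (one_satisfiable cl ->
     forall k : nat, in_fall_spectrum (compl_rel (GPhi cl)) k <-> 3 * k = 7 * n) /\
  (~ one_satisfiable cl ->
     forall k : nat, ~ in_fall_spectrum (compl_rel (GPhi cl)) k).
Proof.
move=> Hmon; split.
- move=> [a Ha] k; split.
  + move=> [f [_ fprop fsize ffall]]; rewrite -fsize.
    exact: (forward_count Hmon fprop ffall).
  + move=> hk; have [F [Fp Fpr Fs Ff]] := backward Hmon Ha.
    have e := forward_count Hmon Fpr Ff.
    exists F; split => //; lia.
- move=> nsat k [f [_ fprop _ ffall]]; apply: nsat.
  exact: (forward_sat Hmon fprop ffall).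
Qed.
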